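(* Let $\mathfrak{G}=(Y,R,E)$ be a descriptive $\mathsf{MS4}$-frame and $Q=E\circ R$. Then (1) $E[\operatorname{qmax}Y]=E_Q[\operatorname{qmax}Y]$; (2) $\mathfrak{G}$ satisfies the global Kuroda principle iff for every $x\in\operatorname{qmax}Y$, $E_Q[x]\subseteq\operatorname{qmax}Y$ (equivalently, $E_Q[\operatorname{qmax}Y]=\operatorname{qmax}Y$).
   Context: A descriptive $\mathsf{MS4}$-frame is $(Y,R,E)$ with $Y$ a Stone space, $R$ a continuous quasi-order, $E$ a continuous equivalence relation (continuous: $R[x]=\{y:xRy\}$ closed for all $x$, $R^{-1}[U]$ clopen for clopen $U$), such that $xEy$, $yRz$ imply $\exists u$ with $xRu$, $uEz$. $x(E\circ R)y$ iff $\exists z$ with $xRz$ and $zEy$. $xE_Qy$ iff $xQy$ and $yQx$. $\operatorname{qmax}Y=\{x: xRy\Rightarrow yRx\}$. For a relation $S$ and set $A$, $S[A]=\{y:\exists a\in A,\ aSy\}$. Global Kuroda principle: for every $x\in\operatorname{qmax}Y$, $E[x]\subseteq\operatorname{qmax}Y$. *)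

(* Defs.v *)
From HB Require Import structures.
From mathcomp Require Import all_boot all_order all_algebra.
From mathcomp Require Import all_classical all_reals all_analysis.
Set Implicit Arguments. Unset Strict Implicit. Unset Printing Implicit Defensive.
Local Open Scope classical_set_scope.

Definition rel_img {Y : Type} (S : Y -> Y -> Prop) (A : set Y) : set Y :=
  [set y | exists2 a, A a & S a y].
Definition rel_pt {Y : Type} (S : Y -> Y -> Prop) (x : Y) : set Y := S x.
Definition rel_preimg {Y : Type} (S : Y -> Y -> Prop) (A : set Y) : set Y :=
  [set x | exists2 a, A a & S x a].

Definition rel_comp {Y : Type} (E R : Y -> Y -> Prop) : Y -> Y -> Prop :=
  fun x y => exists z, R x z /\ E z y.

Definition rel_sym_part {Y : Type} (Q : Y -> Y -> Prop) : Y -> Y -> Prop :=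
  fun x y => Q x y /\ Q y x.

Definition quasi_order {Y : Type} (R : Y -> Y -> Prop) :=
  (forall x, R x x) /\ (forall x y z, R x y -> R y z -> R x z).

Definition equivalence_rel {Y : Type} (E : Y -> Y -> Prop) :=
  (forall x, E x x) /\ (forall x y, E x y -> E y x) /\
  (forall x y z, E x y -> E y z -> E x z).

Definition stone_space (Y : topologicalType) :=
  compact [set: Y] /\ hausdorff_space Y /\ zero_dimensional Y.

Definition continuous_rel {Y : topologicalType} (S : Y -> Y -> Prop) :=
  (forall x, closed (rel_pt S x)) /\
  (forall U : set Y, clopen U -> clopen (rel_preimg S U)).

Definition descriptive_MS4_frame {Y : topologicalType}
    (R E : Y -> Y -> Prop) :=
  stone_space Y /\
  quasi_order R /\ continuous_rel R /\
  equivalence_rel E /\ continuous_rel E /\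
  (forall x y z, E x y -> R y z -> exists u, R x u /\ E u z).

Definition qmax {Y : Type} (R : Y -> Y -> Prop) : set Y :=
  [set x | forall y, R x y -> R y x].

Definition global_kuroda {Y : Type} (R E : Y -> Y -> Prop) :=
  forall x, qmax R x -> rel_pt E x `<=` qmax R.

(* Main.v *)
Require Import Defs.
From HB Require Import structures.
From mathcomp Require Import all_boot all_order all_algebra.
From mathcomp Require Import all_classical all_reals all_analysis.
Local Open Scope classical_set_scope.

Theorem lemma3p10 (Y : topologicalType) (R E : Y -> Y -> Prop) :
  descriptive_MS4_frame R E ->
  let Q := rel_comp E R in
  rel_img E (qmax R) = rel_img (rel_sym_part Q) (qmax R) /\
  (global_kuroda R E <->
     (forall x, qmax R x -> rel_pt (rel_sym_part Q) x `<=` qmax R)) /\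
  ((forall x, qmax R x -> rel_pt (rel_sym_part Q) x `<=` qmax R) <->
     rel_img (rel_sym_part Q) (qmax R) = qmax R).
Proof.
move=> [_ [[Rr Rt] [_ [[Er [Es Et]] _]]]] Q.
have EQ : forall x y, E x y -> rel_sym_part Q x y.
  move=> x y Exy; split.
    by exists x; split => //; apply: Rr.
  by exists y; split; [apply: Rr | apply: Es].
have EQr : forall x, rel_sym_part Q x x by move=> x; apply: EQ.
have qup : forall a z, qmax R a -> R a z -> qmax R z.
  move=> a z qa Raz u Rzu.
  have Rua : R u a by apply: qa; exact: Rt Raz Rzu.
  exact: Rt Rua Raz.
have key : forall a y, qmax R a -> rel_sym_part Q a y -> exists z, qmax R z /\ E z y.
  move=> a y qa [[z [Raz Ezy]] _]; exists z; split => //; exact: qup qa Raz.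
split.
  apply/seteqP; split => y.
    by move=> [a qa Eay]; exists a => //; apply: EQ.
  move=> [a qa Hay]; have [z [qz Ezy]] := key a y qa Hay.
  by exists z.
split.
  split.
    move=> K x qx y Hxy; have [z [qz Ezy]] := key x y qx Hxy.
    exact: (K z qz y Ezy).
  by move=> H x qx y Exy; apply: (H x qx y); apply: EQ.
split.
  move=> H; apply/seteqP; split => y.
    by move=> [a qa Hay]; apply: (H a qa y Hay).
  by move=> qy; exists y.
move=> Heq x qx y Hxy; rewrite -Heq; by exists x.
Qed.
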